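(* Let $n,m>3$ be integers and let $\psi$ be an automorphism of $\mathcal{CSR}(m,n)$. For every vertex $\xi$ of $\mathcal{CSR}(m,n)$ and every $a\neq b$ in $[m]$, there exist a vertex $\varsigma$ of $\mathcal{CSR}(m,n)$ and $p,q\in[m]$ (with $p\neq q$) such that $\psi(\xi+S_{ab})=\varsigma+S_{pq}$.
   Context: For positive integers $m,n$, the cyclic simplicial rook graph $\mathcal{CSR}(m,n)$ is the graph whose vertices are the vectors $(a_1,\dots,a_m)\in\mathbb{Z}_n^m$ with $a_1+\cdots+a_m\equiv 0 \pmod n$, two vertices being adjacent if and only if their vectors differ in exactly two coordinates. $[m]=\{1,\dots,m\}$; $e_i\in\mathbb{Z}_n^m$ is the vector with $1$ in coordinate $i$ and $0$ elsewhere; for distinct $a,b\in[m]$, $S_{ab}=\{\alpha(e_a-e_b)\mid \alpha\in\mathbb{Z}_n\}$; and $x+A=\{x+y\mid y\in A\}$. *)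

(* Defs.v *)
From HB Require Import structures.
From mathcomp Require Import all_boot all_order all_algebra.
Set Implicit Arguments. Unset Strict Implicit. Unset Printing Implicit Defensive.
Import GRing.Theory.
Local Open Scope ring_scope.

(* Vectors of Z_n^m, indexed by 'I_m (coordinate i+1 of the paper is index i).
   'Z_n is Z/nZ for n >= 2 (the theorem assumes n > 3). *)
Definition zvec (m n : nat) := {ffun 'I_m -> 'Z_n}.

Definition is_csr_vertex (m n : nat) (x : zvec m n) : bool := \sum_i x i == 0.
Definition csr_vertex (m n : nat) := {x : zvec m n | is_csr_vertex x}.

Definition csr_adj (m n : nat) (x y : csr_vertex m n) : bool :=
  #|[set i : 'I_m | val x i != val y i]| == 2%N.

Definition csr_automorphism (m n : nat) (psi : csr_vertex m n -> csr_vertex m n) : Prop :=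
  bijective psi /\ forall x y, csr_adj (psi x) (psi y) = csr_adj x y.

Definition unitv (m n : nat) (i : 'I_m) : zvec m n := [ffun j => (j == i)%:R].

Definition csr_coset (m n : nat) (xi : csr_vertex m n) (a b : 'I_m) : {set csr_vertex m n} :=
  [set v : csr_vertex m n |
     [exists alpha : 'Z_n,
        val v == [ffun j => val xi j + alpha * (unitv n a j - unitv n b j)]]].

(* Main.v *)
Require Import Defs.
From mathcomp Require Import all_boot all_order all_algebra ring.
Set Implicit Arguments. Unset Strict Implicit. Unset Printing Implicit Defensive.
Import GRing.Theory.
Local Open Scope ring_scope.

Section Basics.
Variables m n : nat.
Local Notation V := (csr_vertex m n).

Definition ds (u v : V) : {set 'I_m} := [set i | val u i != val v i].

Lemma adjE (u v : V) : csr_adj u v = (#|ds u v| == 2%N).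
Proof. by []. Qed.

Lemma dsC (u v : V) : ds u v = ds v u.
Proof. by apply/setP=> i; rewrite !inE eq_sym. Qed.

Lemma adjC (u v : V) : csr_adj u v = csr_adj v u.
Proof. by rewrite !adjE dsC. Qed.

Lemma vsum0 (u : V) : \sum_i val u i = 0.
Proof. by apply/eqP; case: u. Qed.

Lemma vext (u v : V) : (forall i, val u i = val v i) -> u = v.
Proof. by move=> h; apply: val_inj; apply/ffunP. Qed.

Lemma sum_out (u v : V) (s : seq 'I_m) : uniq s ->
  (forall l, l \notin s -> val u l = val v l) ->
  \sum_(l <- s) (val u l - val v l) = 0.
Proof.
move=> us h.
have : \sum_l (val u l - val v l) = 0 by rewrite sumrB !vsum0 subrr.
rewrite (bigID (fun l => l \in s)) /= [X in _ + X]big1 ?addr0.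
  by rewrite big_uniq.
by move=> l /h ->; rewrite subrr.
Qed.

Lemma one_diff (u v : V) b : (forall i, i != b -> val u i = val v i) -> u = v.
Proof.
move=> h; apply: vext => i.
have := @sum_out u v [:: b] erefl.
rewrite big_seq1 => /(_ _)/eqP; rewrite subr_eq0 => hb.
case: (eqVneq i b) => [->|/h //]; apply/eqP/hb.
by move=> l; rewrite inE; apply: h.
Qed.

Definition mvf (u : V) (i j : 'I_m) (a : 'Z_n) : zvec m n :=
  [ffun l => val u l + a * (unitv n i l - unitv n j l)].

Lemma mvf_ok (u : V) i j a : is_csr_vertex (mvf u i j a).
Proof.
rewrite /is_csr_vertex /mvf.
under eq_bigr do rewrite ffunE.
rewrite big_split /= vsum0 add0r -mulr_sumr sumrB /unitv.
have h k : \sum_(l < m) [ffun j => (j == k)%:R] l = 1 :> 'Z_n.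
  rewrite (bigD1 k) //= ffunE eqxx big1 ?addr0 // => l /negbTE hl.
  by rewrite ffunE hl.
by rewrite !h subrr mulr0.
Qed.

Definition mv (u : V) i j a : V := exist _ (mvf u i j a) (mvf_ok u i j a).

Lemma mvE (u : V) i j a l : i != j ->
  val (mv u i j a) l = if l == i then val u l + a else if l == j then val u l - a else val u l.
Proof.
move=> ij; rewrite /= /mvf ffunE /unitv !ffunE.
case: (eqVneq l i) => [->|li]; first by rewrite ?eqxx (negbTE ij) subr0 mulr1.
case: (eqVneq l j) => [->|lj]; first by rewrite ?eqxx ?(negbTE li) sub0r mulrN1.
by rewrite ?(negbTE li) ?(negbTE lj) subrr mulr0 addr0.
Qed.

Lemma adj_by (u v : V) r s : r != s -> val u r != val v r -> val u s != val v s ->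
  (forall i, i != r -> i != s -> val u i = val v i) -> csr_adj u v.
Proof.
move=> rs hr hs h; rewrite adjE.
have -> : ds u v = [set r; s].
  apply/setP=> i; rewrite !inE.
  case: (eqVneq i r) => [->|ir]; first by rewrite ?eqxx hr.
  case: (eqVneq i s) => [->|iS]; first by rewrite ?eqxx hs orbT.
  by rewrite h ?eqxx // (negbTE ir) (negbTE iS).
by rewrite cards2 rs.
Qed.

Lemma card3 (r s t : 'I_m) : r != s -> r != t -> s != t -> #|[set r; s; t]| = 3%N.
Proof.
move=> rs rt st; rewrite -setUA cardsU1 cards2 st !inE negb_or rs rt.
by [].
Qed.

Lemma nadj3 (u v : V) r s t : r != s -> r != t -> s != t ->
  val u r != val v r -> val u s != val v s -> val u t != val v t ->
  ~~ csr_adj u v /\ u != v.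
Proof.
move=> rs rt st hr hs ht.
have sub : [set r; s; t] \subset ds u v.
  apply/subsetP=> i; rewrite !inE.
  by case/orP => [/orP [] | ] /eqP ->.
have := subset_leq_card sub; rewrite card3 // => h3.
split; first by rewrite adjE; apply/negP => /eqP h2; rewrite h2 in h3.
by apply/negP => /eqP e; move: hr; rewrite e eqxx.
Qed.

Lemma adj_neq (u v : V) : csr_adj u v -> u != v.
Proof.
rewrite adjE; apply: contraTneq => ->.
suff -> : ds v v = set0 by rewrite cards0.
by apply/setP=> i; rewrite !inE eqxx.
Qed.

Lemma dsE (u v : V) i : (i \in ds u v) = (val u i != val v i).
Proof. by rewrite inE. Qed.

Lemma fromds (u v : V) r s i : ds u v = [set r; s] ->
  (val u i != val v i) = (i == r) || (i == s).
Proof. by move=> h; rewrite -dsE h !inE. Qed.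

Lemma two_in (S : {set 'I_m}) c : #|S| == 2%N -> c \in S ->
  exists d, d != c /\ S = [set c; d].
Proof.
case/cards2P => [r [s [rs ->]]]; rewrite !inE => /orP [] /eqP ->.
  by exists s; split; [rewrite eq_sym|].
by exists r; split; [|rewrite setUC].
Qed.

Lemma adj2 (u v : V) : csr_adj u v -> exists r s, r != s /\ ds u v = [set r; s].
Proof. by rewrite adjE => /cards2P. Qed.

Lemma adj_in (u v : V) c : csr_adj u v -> val u c != val v c ->
  exists d, d != c /\ forall i, (val u i != val v i) = (i == c) || (i == d).
Proof.
rewrite adjE => h hc; have [d [dc e]] := two_in h (etrans (dsE u v c) hc).
by exists d; split => // i; rewrite (fromds _ e).
Qed.

Definition inL (x y u : V) : bool :=
  [forall i, (val x i == val y i) ==> (val u i == val x i)].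

Lemma inLP (x y u : V) :
  reflect (forall i, val x i = val y i -> val u i = val x i) (inL x y u).
Proof.
apply: (iffP forallP) => h i.
  by move=> e; have /implyP/(_ (introT eqP e))/eqP := h i.
by apply/implyP => /eqP /h ->.
Qed.

Lemma inL_x (x y : V) : inL x y x.
Proof. by apply/inLP. Qed.

Lemma inL_y (x y : V) : inL x y y.
Proof. by apply/inLP. Qed.

Lemma Lpt_eqx (x y z : V) a b : ds x y = [set a; b] -> inL x y z ->
  val z a = val x a -> z = x.
Proof.
move=> e /inLP hz za; apply: (@one_diff _ _ b) => i ib.
case: (eqVneq i a) => [->//|ia]; apply: hz; apply/eqP.
by rewrite -[_ == _]negbK (fromds _ e) (negbTE ia) (negbTE ib).
Qed.

Lemma Lpt_eqy (x y z : V) a b : ds x y = [set a; b] -> inL x y z ->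
  val z a = val y a -> z = y.
Proof.
move=> e /inLP hz za; apply: (@one_diff _ _ b) => i ib.
case: (eqVneq i a) => [->//|ia].
have xy : val x i = val y i.
  by apply/eqP; rewrite -[_ == _]negbK (fromds _ e) (negbTE ia) (negbTE ib).
by rewrite hz.
Qed.

Lemma L_adj (x y u w : V) a b : ds x y = [set a; b] -> inL x y u -> inL x y w ->
  u != w -> csr_adj u w.
Proof.
move=> e /inLP hu /inLP hw uw.
have sub : ds u w \subset [set a; b].
  apply/subsetP => i; rewrite dsE; apply: contraR => hi.
  have xy : val x i = val y i by apply/eqP; rewrite -[_ == _]negbK -dsE e.
  by rewrite hu // hw.
have le2 : (#|ds u w| <= 2)%N.
  by apply: leq_trans (subset_leq_card sub) _; rewrite cards2; case: (a != b).
rewrite adjE eqn_leq le2 /=.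
case: (ltnP 1 #|ds u w|) => // h1.
exfalso; move: uw; apply/negP; rewrite negbK; apply/eqP.
move: h1; rewrite leq_eqVlt ltnS leqn0 => /orP [/cards1P [i ei]| /eqP/cards0_eq e0].
  apply: (@one_diff _ _ i) => j ji; apply/eqP; rewrite -[_ == _]negbK -dsE ei inE.
  exact: ji.
apply: vext => j; apply/eqP; rewrite -[_ == _]negbK -dsE e0 inE.
by [].
Qed.

Lemma key (x y q : V) a b c : a != b -> ds x y = [set a; b] ->
  csr_adj q x -> csr_adj q y -> val x c = val y c -> val q c != val x c ->
  [/\ c != a, c != b,
     (val q a = val y a /\ val q b = val x b) \/ (val q a = val x a /\ val q b = val y b)
   & forall i, i != a -> i != b -> i != c -> val q i = val x i].
Proof.
move=> ab e aqx aqy xyc qc.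
have hxy := fun i => fromds i e.
have ca : c != a by apply/eqP => E; move/eqP: xyc; rewrite E -[_ == _]negbK hxy eqxx.
have cb : c != b by apply/eqP => E; move/eqP: xyc; rewrite E -[_ == _]negbK hxy eqxx orbT.
have [d1 [d1c h1]] := adj_in aqx qc.
have qcy : val q c != val y c by rewrite -xyc.
have [d2 [d2c h2]] := adj_in aqy qcy.
have pick k : val x k != val y k -> k != c -> k = d1 \/ k = d2.
  move=> xyk kc; case: (eqVneq (val q k) (val x k)) => [qk|qk].
    have : val q k != val y k by rewrite qk.
    by rewrite h2 (negbTE kc) /= => /eqP; right.
  by move: qk; rewrite h1 (negbTE kc) /= => /eqP; left.
have xya : val x a != val y a by rewrite hxy eqxx.
have xyb : val x b != val y b by rewrite hxy eqxx orbT.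
have eqn (u v : V) k : (val u k != val v k) = false -> val u k = val v k.
  by move/negbT; rewrite negbK => /eqP.
have ac : a != c by rewrite eq_sym.
have bc : b != c by rewrite eq_sym.
have [ea|ea] := pick a xya ac; have [eb|eb] := pick b xyb bc.
- by move: ab; rewrite ea eb eqxx.
- split => //; first left; first split.
  + by apply: eqn; rewrite h2 (negbTE ac) -eb (negbTE ab).
  + by apply: eqn; rewrite h1 (negbTE bc) -ea eq_sym (negbTE ab).
  + by move=> i ia ib ic; apply: eqn; rewrite h1 (negbTE ic) -ea (negbTE ia).
- split => //; first right; first split.
  + by apply: eqn; rewrite h1 (negbTE ac) -eb (negbTE ab).
  + by apply: eqn; rewrite h2 (negbTE bc) -ea eq_sym (negbTE ab).
  + by move=> i ia ib ic; apply: eqn; rewrite h1 (negbTE ic) -eb (negbTE ib).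
- by move: ab; rewrite ea eb eqxx.
Qed.

Definition tri (z q : V) p r t := [/\ p != r, p != t & r != t] /\
  [/\ val z p != val q p, val z r != val q r, val z t != val q t &
  forall i, i != p -> i != r -> i != t -> val z i = val q i].

Lemma out (x y q z : V) a b : a != b -> ds x y = [set a; b] ->
  csr_adj q x -> csr_adj q y -> ~~ inL x y q -> inL x y z -> z != x -> z != y ->
  exists c, tri z q a b c.
Proof.
move=> ab e aqx aqy nq zL zx zy.
have [c /negP] : exists c, ~~ ((val x c == val y c) ==> (val q c == val x c)).
  by apply/existsP; rewrite -negb_forall.
case: (val x c == val y c) /eqP => //= xyc /negP qc.
have [ca cb hab hi] := key ab e aqx aqy xyc qc.
have hxy := fun i => fromds i e.
have za1 : val z a != val x a by apply: contra_neq zx; apply: Lpt_eqx e zL.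
have za2 : val z a != val y a by apply: contra_neq zy; apply: Lpt_eqy e zL.
have e' : ds x y = [set b; a] by rewrite setUC.
have zb1 : val z b != val x b by apply: contra_neq zx; apply: Lpt_eqx e' zL.
have zb2 : val z b != val y b by apply: contra_neq zy; apply: Lpt_eqy e' zL.
move/inLP: zL => zL.
exists c; split; first by rewrite ?(eq_sym a c) ?(eq_sym b c).
split.
- by case: hab => [[-> _]|[-> _]].
- by case: hab => [[_ ->]|[_ ->]].
- by rewrite zL // eq_sym.
- move=> i ia ib ic; rewrite hi // zL //.
  by apply/eqP; rewrite -[_ == _]negbK hxy (negbTE ia) (negbTE ib).
Qed.

Definition CN (u v : V) : {set V} := [set w | csr_adj w u && csr_adj w v].

Lemma tri_213 (z q : V) p r t : tri z q p r t -> tri z q r p t.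
Proof.
move=> [[pr pt rt] [hp hr ht hi]]; split; first by split; rewrite // eq_sym.
by split => // i ir ip it; apply: hi.
Qed.

Lemma tri_132 (z q : V) p r t : tri z q p r t -> tri z q p t r.
Proof.
move=> [[pr pt rt] [hp hr ht hi]]; split; first by split; rewrite // eq_sym.
by split => // i ip it ir; apply: hi.
Qed.

Lemma sum3 (z q : V) p r t : tri z q p r t ->
  (val q p - val z p) + (val q r - val z r) + (val q t - val z t) = 0.
Proof.
move=> [[pr pt rt] [hp hr ht hi]].
have := @sum_out q z [:: p; r; t].
rewrite !big_cons big_nil addr0 addrA; apply.
  by rewrite /= !inE negb_or pr pt rt.
move=> l; rewrite !inE !negb_or => /and3P [lp lr lt].
by rewrite hi.
Qed.

Definition cf (z q : V) p r := mv z p r (val q p - val z p).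

Lemma cfspec (z q : V) p r t : tri z q p r t ->
  [/\ csr_adj (cf z q p r) z, csr_adj (cf z q p r) q, val (cf z q p r) p = val q p,
      val (cf z q p r) r != val q r & val (cf z q p r) t != val q t] /\
  (val (cf z q p r) r != val z r /\ val (cf z q p r) t = val z t).
Proof.
move=> T; have S := sum3 T; move: T => [[pr pt rt] [hp hr ht hi]].
have cE l : val (cf z q p r) l = if l == p then val q l else
   if l == r then val z l - (val q p - val z p) else val z l.
  rewrite /cf mvE //; case: (eqVneq l p) => [->|//]; by rewrite addrC subrK.
have dp : val q p - val z p != 0 by rewrite subr_eq0 eq_sym.
have tp : t != p by rewrite eq_sym.
have tr : t != r by rewrite eq_sym.
have rp : r != p by rewrite eq_sym.
have cr : val (cf z q p r) r != val q r.
  rewrite cE (negbTE rp) eqxx.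
  apply/eqP => E; move: ht; rewrite eq_sym -subr_eq0; apply/negP; rewrite negbK.
  apply/eqP; rewrite -E in S; rewrite -S; ring.
have ct : val (cf z q p r) t = val z t.
  by rewrite cE (negbTE tp) (negbTE tr).
split; split.
- apply: (@adj_by _ _ p r) => //.
  + by rewrite cE eqxx eq_sym.
  + by rewrite cE (negbTE rp) eqxx subr_eq addrC -subr_eq subrr eq_sym.
  + by move=> i ip ir; rewrite cE (negbTE ip) (negbTE ir).
- apply: (@adj_by _ _ r t) => //; first by rewrite ct.
  move=> i ir it; rewrite cE (negbTE ir).
  by case: (eqVneq i p) => // ip; rewrite hi.
- by rewrite cE eqxx.
- exact: cr.
- by rewrite ct.
- by rewrite cE (negbTE rp) eqxx subr_eq addrC -subr_eq subrr eq_sym.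
- exact: ct.
Qed.

Lemma neq_at (u v : V) l w : val u l = w -> val v l != w -> u != v.
Proof. by move=> hu hv; apply/eqP => E; move: hv; rewrite -E hu eqxx. Qed.

Lemma cn5 (z q : V) i j k : tri z q i j k -> (5 <= #|CN z q|)%N.
Proof.
move=> T.
have [[a1 b1 p1 r1 t1] [rz1 tz1]] := cfspec T.
have [[a2 b2 p2 r2 t2] [rz2 tz2]] := cfspec (tri_213 T).
have [[a3 b3 p3 r3 t3] [rz3 tz3]] := cfspec (tri_132 T).
have [[a4 b4 p4 r4 t4] [rz4 tz4]] := cfspec (tri_213 (tri_132 T)).
have [[a5 b5 p5 r5 t5] [rz5 tz5]] := cfspec (tri_132 (tri_213 T)).
set c1 := cf z q i j in a1 b1 p1 r1 t1 rz1 tz1.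
set c2 := cf z q j i in a2 b2 p2 r2 t2 rz2 tz2.
set c3 := cf z q i k in a3 b3 p3 r3 t3 rz3 tz3.
set c4 := cf z q k i in a4 b4 p4 r4 t4 rz4 tz4.
set c5 := cf z q j k in a5 b5 p5 r5 t5 rz5 tz5.
have sub : [:: c1; c2; c3; c4; c5] \subset CN z q.
  apply/subsetP => w; rewrite !inE => /orP [/eqP->|/orP [/eqP->|/orP [/eqP->|/orP [/eqP->|/eqP->]]]];
  by apply/andP.
apply: leq_trans (subset_leq_card sub); rewrite (card_uniqP _) //=.
rewrite !inE !negb_or.
have n12 : c1 != c2 := neq_at p1 r2.
have n13 : c1 != c3 by rewrite eq_sym; apply: (neq_at tz3 rz1).
have n14 : c1 != c4 := neq_at p1 r4.
have n15 : c1 != c5 := neq_at p1 t5.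
have n23 : c2 != c3 := neq_at p2 t3.
have n24 : c2 != c4 := neq_at p2 t4.
have n25 : c2 != c5 by rewrite eq_sym; apply: (neq_at tz5 rz2).
have n34 : c3 != c4 := neq_at p3 r4.
have n35 : c3 != c5 := neq_at p3 t5.
have n45 : c4 != c5 := neq_at p4 r5.
by rewrite n12 n13 n14 n15 n23 n24 n25 n34 n35 n45.
Qed.

Definition Tp (x y z : V) : Prop := forall q, csr_adj q x -> csr_adj q y -> q != z ->
  ~~ csr_adj q z -> (5 <= #|CN z q|)%N.
Definition Vp (x y z : V) : Prop := forall q1 q2,
  csr_adj q1 x -> csr_adj q1 y -> csr_adj q1 z ->
  csr_adj q2 x -> csr_adj q2 y -> csr_adj q2 z -> q1 != q2 -> csr_adj q1 q2.

Lemma collinear (x y z : V) a b : a != b -> ds x y = [set a; b] -> inL x y z ->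
  z != x -> z != y -> Tp x y z /\ Vp x y z.
Proof.
move=> ab e zL zx zy.
have inq q : csr_adj q x -> csr_adj q y -> csr_adj q z -> inL x y q.
  move=> qx qy qz; apply/negPn/negP => nq.
  have [c [[ab' ac bc] [h1 h2 h3 _]]] := out ab e qx qy nq zL zx zy.
  have [nz _] := nadj3 ab' ac bc h1 h2 h3.
  by move: nz; rewrite adjC qz.
split.
  move=> q qx qy qz nqz; case: (boolP (inL x y q)) => qL.
    by move: nqz; rewrite (L_adj e qL zL qz).
  by have [c T] := out ab e qx qy qL zL zx zy; apply: cn5 T.
move=> q1 q2 h1x h1y h1z h2x h2y h2z ne.
exact: (L_adj e (inq _ h1x h1y h1z) (inq _ h2x h2y h2z) ne).
Qed.


Definition gf (z q : V) (U : {set 'I_m}) : zvec m n :=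
  [ffun i => if i \in U then val q i else val z i].

Lemma card_val_in (L : seq (zvec m n)) : (#|[set w : V | val w \in L]| <= size L)%N.
Proof.
rewrite -(card_imset _ val_inj); apply: leq_trans (card_size L).
apply: subset_leq_card; apply/subsetP => v /imsetP [w]; rewrite inE => h ->.
exact: h.
Qed.

Lemma cn4 (z q : V) a b c k : a != b -> a != c -> a != k -> b != c -> b != k -> c != k ->
  (forall i, (val z i != val q i) = [|| i == a, i == b, i == c | i == k]) ->
  (val q a - val z a) + (val q b - val z b) != 0 ->
  (val q c - val z c) + (val q k - val z k) != 0 ->
  (#|CN z q| <= 4)%N.
Proof.
move=> ab ac ak bc bk ck hD sab sck.
have eD : ds z q = [set a; b; c; k].
  by apply/setP => i; rewrite dsE hD !inE !orbA.
have cD : #|ds z q| = 4%N.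
  rewrite eD -!setUA cardsU1 cardsU1 cards2 ck !inE !negb_or.
  by rewrite ab ac ak bc bk.
pose L := [:: gf z q [set a; c]; gf z q [set a; k]; gf z q [set b; c]; gf z q [set b; k]].
apply: leq_trans (card_val_in L); apply: subset_leq_card.
apply/subsetP => w; rewrite !inE => /andP [wz wq].
set U := ds z w; set W := ds w q.
have cU : #|U| = 2%N by apply/eqP; rewrite /U dsC -adjE.
have cW : #|W| = 2%N by apply/eqP; rewrite /W -adjE.
have sub : ds z q \subset U :|: W.
  apply/subsetP => i; rewrite !inE; apply: contraR; rewrite negb_or !negbK.
  by move=> /andP [/eqP -> /eqP ->].
have le := leq_card_setU U W.
have eUW : U :|: W = ds z q.
  apply/eqP; rewrite eq_sym eqEcard sub /= cD.
  by move: le => [le _]; rewrite cU cW in le.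
have disj : [disjoint U & W].
  move: le => [_ <-]; rewrite eUW cD cU cW //.
have wE i : val w i = if i \in U then val q i else val z i.
  case: ifP => iU.
    have iW : i \notin W by rewrite (disjointFr disj iU).
    by move: iW; rewrite !inE negbK => /eqP.
  by move: iU; rewrite !inE => /negbT; rewrite negbK => /eqP.
have UD : U \subset ds z q by rewrite -eUW subsetUl.
have [r [s [rs eU]]] := cards2P _ (introT eqP cU).
have rD : r \in ds z q by apply: (subsetP UD); rewrite eU !inE eqxx.
have sD : s \in ds z q by apply: (subsetP UD); rewrite eU !inE eqxx orbT.
have S : (val q r - val z r) + (val q s - val z s) = 0.
  have := @sum_out w z [:: r; s]; rewrite !big_cons big_nil addr0.
  rewrite !wE eU !inE !eqxx orbT /=; apply; first by rewrite /= inE rs.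
  move=> l; rewrite !inE negb_or => /andP [lr ls].
  by rewrite wE eU !inE (negbTE lr) (negbTE ls).
have -> : val w = gf z q [set r; s].
  by apply/ffunP => i; rewrite ffunE wE eU.
move: rD sD; rewrite eD !inE -!orbA.
have sba : (val q b - val z b) + (val q a - val z a) != 0 by rewrite addrC.
have skc : (val q k - val z k) + (val q c - val z c) != 0 by rewrite addrC.
case/or4P => /eqP er; case/or4P => /eqP es; subst r s;
  first [ by rewrite eqxx in rs | by move: sab; rewrite S eqxx | by move: sba; rewrite S eqxx
        | by move: sck; rewrite S eqxx | by move: skc; rewrite S eqxx
        | by rewrite ?eqxx ?orbT | by rewrite (setUC [set c]) ?eqxx ?orbT
        | by rewrite (setUC [set k]) ?eqxx ?orbT ].
Qed.

Ltac neqs := repeat match goal with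
  | H : is_true (?u != ?u) |- _ => by rewrite eqxx in H
  | H : is_true (?u != ?v) |- context [?u == ?v] => rewrite (negbTE H)
  | H : is_true (?u != ?v) |- context [?v == ?u] => rewrite (eq_sym v u) (negbTE H)
  end.

Lemma nD (w al : 'Z_n) : al != 0 -> w != w + al.
Proof. by move=> h; rewrite -subr_eq0 opprD addrA subrr add0r oppr_eq0. Qed.
Lemma nB (w al : 'Z_n) : al != 0 -> w != w - al.
Proof. by move=> h; rewrite -subr_eq0 opprB addrC subrK. Qed.
Lemma nDB (w al : 'Z_n) : al + al != 0 -> w + al != w - al.
Proof.
move=> h; rewrite -subr_eq0; have -> : w + al - (w - al) = al + al by ring.
exact: h.
Qed.

Lemma eDB (w al : 'Z_n) : al + al = 0 -> w + al = w - al.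
Proof. move=> h; apply/eqP; rewrite -subr_eq0; have -> : w + al - (w - al) = al + al by ring.
by rewrite h.
Qed.

Ltac fin al0 := first [ by []
  | by apply: nD al0 | by rewrite eq_sym; apply: nD al0
  | by apply: nB al0 | by rewrite eq_sym; apply: nB al0
  | by apply: nDB | by rewrite eq_sym; apply: nDB
  | by apply: eDB | by apply/esym/eDB ].

Ltac icase i a b c k := case: (eqVneq i a) => [->|?]; [|case: (eqVneq i b) => [->|?];
  [|case: (eqVneq i c) => [->|?]; [|case: (eqVneq i k) => [->|?]]]].

Ltac go r s a b c k E1 E2 al0 := apply: (@adj_by _ _ r s) => //;
  [ rewrite ?E1 ?E2 ?eqxx; neqs; rewrite ?eqxx; fin al0
  | rewrite ?E1 ?E2 ?eqxx; neqs; rewrite ?eqxx; fin al0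
  | let i := fresh "i" in move=> i; icase i a b c k; move=> ? ?; rewrite ?E1 ?E2;
    rewrite ?eqxx; neqs; rewrite ?eqxx; fin al0 ].

Lemma star1 (x y z : V) a b c : (3 < m)%N -> a != b -> ds x y = [set a; b] ->
  c != a -> c != b -> val z a = val y a -> val z b = val x b -> val z c != val x c ->
  (forall i, i != a -> i != b -> i != c -> val z i = val x i) ->
  ~ (Tp x y z /\ Vp x y z).
Proof.
move=> m3 ab e ca cb za zb zc zi [HT HV].
have hxy := fun i => fromds i e.
have xyi i : i != a -> i != b -> val y i = val x i.
  by move=> ia ib; apply/eqP; rewrite eq_sym -[_ == _]negbK hxy (negbTE ia) (negbTE ib).
set al := val y a - val x a.
have al0 : al != 0 by rewrite subr_eq0 eq_sym hxy eqxx.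
have ya : val y a = val x a + al by rewrite /al addrC subrK.
have yb : val y b = val x b - al.
  have S : (val y a - val x a) + (val y b - val x b) = 0.
    have := @sum_out y x [:: a; b]; rewrite !big_cons big_nil addr0; apply.
      by rewrite /= inE ab.
    move=> l; rewrite !inE negb_or => /andP [la lb]; exact: xyi.
  apply/eqP; rewrite -subr_eq0 -S /al; apply/eqP; ring.
have zc' : val z c = val x c - al.
  have S : (val z a - val x a) + (val z c - val x c) = 0.
    have := @sum_out z x [:: a; c]; rewrite !big_cons big_nil addr0; apply.
      by rewrite /= inE eq_sym ca.
    move=> l; rewrite !inE negb_or => /andP [la lc].
    case: (eqVneq l b) => [->|lb]; first exact: zb.
    exact: zi.
  apply/eqP; rewrite -subr_eq0 -S /al za; apply/eqP; ring.
have [k [ka kb kc]] : exists k, [/\ k != a, k != b & k != c].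
  have : ~~ ([set: 'I_m] \subset [set a; b; c]).
    apply/negP => /subset_leq_card; rewrite cardsT card_ord.
    apply/negP; rewrite -ltnNge; apply: leq_ltn_trans m3.
    by rewrite -setUA cardsU1 cards2; case: (_ \notin _); case: (b != c).
  case/subsetPn => k _; rewrite !inE !negb_or => /andP [/andP [ka kb] kc].
  by exists k.
have yE i : val y i = if i == a then val x i + al else if i == b then val x i - al else val x i.
  by case: (eqVneq i a) => [->|ia] //; case: (eqVneq i b) => [->|ib] //; rewrite xyi.
have zE i : val z i = if i == a then val x i + al else if i == c then val x i - al else val x i.
  case: (eqVneq i a) => [->|ia]; first by rewrite za ya.
  case: (eqVneq i c) => [->|ic] //.
  by case: (eqVneq i b) => [->|ib] //; rewrite zi.
have ac : a != c by rewrite eq_sym.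
have bc : b != c by rewrite eq_sym.
have ak : a != k by rewrite eq_sym.
have bk : b != k by rewrite eq_sym.
have ck : c != k by rewrite eq_sym.
have ba : b != a by rewrite eq_sym.
have xE i : val x i = val x i by [].
case: (eqVneq (al + al) 0) => a2.
- pose q1 := mv x c b al; pose q2 := mv x a k al.
  have q1E i : val q1 i = if i == c then val x i + al else if i == b then val x i - al else val x i.
    exact: mvE.
  have q2E i : val q2 i = if i == a then val x i + al else if i == k then val x i - al else val x i.
    exact: mvE.
  have h1x : csr_adj q1 x by go c b a b c k q1E q1E al0.
  have h1y : csr_adj q1 y by go a c a b c k q1E yE al0.
  have h1z : csr_adj q1 z by go a b a b c k q1E zE al0.
  have h2x : csr_adj q2 x by go a k a b c k q2E q2E al0.
  have h2y : csr_adj q2 y by go b k a b c k q2E yE al0.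
  have h2z : csr_adj q2 z by go c k a b c k q2E zE al0.
  have [nad ne] : ~~ csr_adj q1 q2 /\ q1 != q2.
    by apply: (nadj3 ab ac bc); rewrite q1E q2E ?eqxx; neqs; rewrite ?eqxx; fin al0.
  by move: nad; rewrite (HV q1 q2).
- pose q := mv x k b al.
  have qE i : val q i = if i == k then val x i + al else if i == b then val x i - al else val x i.
    exact: mvE.
  have hx : csr_adj q x by go k b a b c k qE qE al0.
  have hy : csr_adj q y by go a k a b c k qE yE al0.
  have [nad ne] : ~~ csr_adj q z /\ q != z.
    by apply: (nadj3 ab ac bc); rewrite qE zE ?eqxx; neqs; rewrite ?eqxx; fin al0.
  have := HT q hx hy ne nad; apply/negP; rewrite -ltnNge ltnS.
  apply: (cn4 ab ac ak bc bk ck).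
  + move=> i; rewrite qE zE; icase i a b c k; rewrite ?eqxx; neqs; rewrite ?eqxx /=.
    all: try (by rewrite eqxx).
    all: try (by rewrite eq_sym nD).
    all: try (by rewrite eq_sym nB).
    all: try (by rewrite nDB).
    all: try (by rewrite nB).
    all: try (by rewrite nD).
    reflexivity.
  + rewrite !qE !zE; neqs; rewrite ?eqxx.
    have -> : val x a - (val x a + al) + (val x b - al - val x b) = - (al + al) by ring.
    by rewrite oppr_eq0.
  + rewrite !qE !zE; neqs; rewrite ?eqxx.
    have -> : val x c - (val x c - al) + (val x k + al - val x k) = al + al by ring.
    exact: a2.
Qed.

Lemma star (x y z : V) : (3 < m)%N -> csr_adj x y -> csr_adj z x -> csr_adj z y ->
  ~~ inL x y z -> ~ (Tp x y z /\ Vp x y z).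
Proof.
move=> m3 xy zx zy nz.
have [a [b [ab e]]] := adj2 xy.
have [c /negP] : exists c, ~~ ((val x c == val y c) ==> (val z c == val x c)).
  by apply/existsP; rewrite -negb_forall.
case: (val x c == val y c) /eqP => //= xyc /negP zc.
have [ca cb hab hi] := key ab e zx zy xyc zc.
case: hab => [[za zb]|[za zb]].
  exact: (star1 m3 ab e ca cb za zb zc hi).
have ba : b != a by rewrite eq_sym.
have e' : ds x y = [set b; a] by rewrite setUC.
apply: (star1 m3 ba e' cb ca zb za zc) => i ib ia ic; exact: hi.
Qed.

Section Psi.
Variable psi : V -> V.
Hypothesis hpsi : csr_automorphism psi.

Lemma psi_adj u v : csr_adj (psi u) (psi v) = csr_adj u v.
Proof. exact: hpsi.2. Qed.

Lemma CN_psi u v : #|CN (psi u) (psi v)| = #|CN u v|.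
Proof.
have [g gK Kg] := hpsi.1.
have -> : CN (psi u) (psi v) = psi @: CN u v.
  apply/setP => w; apply/idP/idP.
    rewrite inE => /andP [wu wv]; apply/imsetP; exists (g w); last by rewrite Kg.
    by rewrite inE -(psi_adj (g w) u) -(psi_adj (g w) v) Kg wu wv.
  by case/imsetP => w' ; rewrite !inE => /andP [h1 h2] ->; rewrite !psi_adj h1 h2.
by rewrite card_imset //; apply: can_inj gK.
Qed.

Lemma Tp_psi x y z : Tp x y z -> Tp (psi x) (psi y) (psi z).
Proof.
have [g gK Kg] := hpsi.1.
move=> h q qx qy qz nqz; rewrite -(Kg q) CN_psi.
apply: h.
- by rewrite -psi_adj Kg.
- by rewrite -psi_adj Kg.
- by apply: contra_neq qz => <-; rewrite Kg.
- by rewrite -psi_adj Kg.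
Qed.

Lemma Vp_psi x y z : Vp x y z -> Vp (psi x) (psi y) (psi z).
Proof.
have [g gK Kg] := hpsi.1.
move=> h q1 q2 h1 h2 h3 h4 h5 h6 ne; rewrite -(Kg q1) -(Kg q2) psi_adj.
apply: h; try by rewrite -psi_adj Kg.
by apply: contra_neq ne => /(congr1 psi); rewrite !Kg.
Qed.
End Psi.

Lemma coset_mem (s : V) p q v : (v \in csr_coset s p q) = [exists al, v == mv s p q al].
Proof. by rewrite inE; apply: eq_existsb => al; rewrite -val_eqE. Qed.

Lemma card_coset (s : V) p q : p != q -> #|csr_coset s p q| = #|[set: 'Z_n]|.
Proof.
move=> pq.
have -> : csr_coset s p q = (mv s p q) @: [set: 'Z_n].
  apply/setP => v; rewrite coset_mem; apply/existsP/imsetP => [[al /eqP ->]|[al _ ->]].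
    by exists al.
  by exists al.
rewrite card_imset // => al be /(congr1 (fun w : V => val w p)).
by rewrite !mvE // eqxx => /addrI.
Qed.

Lemma inL_coset (X Y W : V) p q : p != q -> ds X Y = [set p; q] -> inL X Y W ->
  W \in csr_coset X p q.
Proof.
move=> pq e /inLP wL; rewrite coset_mem; apply/existsP; exists (val W p - val X p).
have xyi i : i != p -> i != q -> val X i = val Y i.
  by move=> ip iq; apply/eqP; rewrite -[_ == _]negbK (fromds _ e) (negbTE ip) (negbTE iq).
have S : (val W p - val X p) + (val W q - val X q) = 0.
  have := @sum_out W X [:: p; q]; rewrite !big_cons big_nil addr0; apply.
    by rewrite /= inE pq.
  move=> l; rewrite !inE negb_or => /andP [lp lq]; apply: wL; exact: xyi.
apply/eqP; apply: vext => i; rewrite mvE //.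
case: (eqVneq i p) => [->|ip]; first by ring.
case: (eqVneq i q) => [->|iq].
  apply/eqP; rewrite -subr_eq0 -S; apply/eqP; ring.
by rewrite wL // xyi.
Qed.

End Basics.

Theorem lemma3 (m n : nat) (hm : (3 < m)%N) (hn : (3 < n)%N)
  (psi : csr_vertex m n -> csr_vertex m n) (hpsi : csr_automorphism psi)
  (xi : csr_vertex m n) (a b : 'I_m) (hab : a != b) :
  exists (sigma : csr_vertex m n) (p q : 'I_m),
    p != q /\ psi @: csr_coset xi a b = csr_coset sigma p q.
Proof.
have [g gK Kg] := hpsi.1.
pose y := mv xi a b 1.
have yE i := @mvE m n xi a b 1 i hab.
have one0 : (1 : 'Z_n) != 0 := oner_neq0 _.
have exy : ds xi y = [set a; b].
  apply/setP => i; rewrite dsE yE !inE.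
  case: (eqVneq i a) => [->|ia]; first by rewrite nD.
  by case: (eqVneq i b) => [->|ib]; [rewrite nB | rewrite eqxx].
have axy : csr_adj xi y by rewrite adjE exy cards2 hab.
have [p [q [pq e']]] : exists p q, p != q /\ ds (psi xi) (psi y) = [set p; q].
  by apply: adj2; rewrite psi_adj.
exists (psi xi), p, q; split => //.
have sub : psi @: csr_coset xi a b \subset csr_coset (psi xi) p q.
  apply/subsetP => w /imsetP [u uC ->].
  have uL : inL xi y u.
    move: uC; rewrite coset_mem => /existsP [al /eqP ->]; apply/inLP => i.
    rewrite yE mvE //.
    case: (eqVneq i a) => [_ /eqP|ia]; first by rewrite (negbTE (nD _ one0)).
    by case: (eqVneq i b) => [_ /eqP|ib]; first by rewrite (negbTE (nB _ one0)).
  apply: (inL_coset pq e').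
  case: (eqVneq u xi) => [->|ux]; first exact: inL_x.
  case: (eqVneq u y) => [->|uy]; first exact: inL_y.
  have ax : csr_adj u xi := L_adj exy uL (inL_x xi y) ux.
  have ay : csr_adj u y := L_adj exy uL (inL_y xi y) uy.
  have [HT HV] := collinear hab exy uL ux uy.
  apply/negPn/negP => nL.
  apply: (star hm _ _ _ nL); rewrite ?psi_adj //.
  by split; [apply: Tp_psi | apply: Vp_psi].
apply/eqP; rewrite eqEcard sub card_imset; last exact: can_inj gK.
by rewrite (card_coset _ pq) (card_coset _ hab) leqnn.
Qed.
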